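(* Assume $N\ge2$ and that conditions A, D' and E' hold for the semi-Markov processes $\eta^{(\varepsilon)}(t)$, $\varepsilon\in(0,\varepsilon_0]$, together with the paper's standing regularity conditions on the semi-Markov kernels, and let $\delta^*=\min_{i\in\mathbb{X},\,j\in\mathbb{Y}_i}(\delta_{ij}\wedge\dot\delta_{ij})$. Then for every $r\in\mathbb{X}$ the reduced semi-Markov processes ${}_r\eta^{(\varepsilon)}(t)$ satisfy conditions A and D' (with transition probabilities ${}_rp_{ij}$ and sets ${}_r\mathbb{Y}_i$, same $\varepsilon_0$) and the same standing regularity conditions, and they satisfy condition E': for every $i\in{}_r\mathbb{X}$, $j\in{}_r\mathbb{Y}_i$ there are integers ${}_rm^-_{ij}\le{}_rm^+_{ij}$, reals ${}_rb_{ij}[l]$ with ${}_rb_{ij}[{}_rm^-_{ij}]>0$, and ${}_r\dot\delta_{ij}\in(0,1]$, ${}_r\dot G_{ij}\in(0,\infty)$, ${}_r\dot\varepsilon_{ij}\in(0,\varepsilon_0]$ such that $\big|{}_re_{ij}(\varepsilon)-\sum_{l={}_rm^-_{ij}}^{{}_rm^+_{ij}}{}_rb_{ij}[l]\varepsilon^l\big|\le{}_r\dot G_{ij}\varepsilon^{{}_rm^+_{ij}+{}_r\dot\delta_{ij}}$ for $0<\varepsilon\le{}_r\dot\varepsilon_{ij}$. Moreover this holds with ${}_r\dot\delta_{ij}\ge\delta^*$ for all $j\in{}_r\mathbb{Y}_i$, $i\in{}_r\mathbb{X}$, $r\in\mathbb{X}$.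
   Context: Let $\mathbb{X}=\{1,\dots,N\}$, $0<\varepsilon_0\le1$. For each $\varepsilon\in(0,\varepsilon_0]$, $\eta^{(\varepsilon)}(t)$ is a semi-Markov process on $\mathbb{X}$ with semi-Markov transition probabilities $Q^{(\varepsilon)}_{ij}(t)$; $p_{ij}(\varepsilon)=Q^{(\varepsilon)}_{ij}(\infty)$ are the transition probabilities of the embedded Markov chain and $e_{ij}(\varepsilon)=\int_0^\infty t\,Q^{(\varepsilon)}_{ij}(dt)$ the (finite) expectations of sojourn times. The paper also assumes standing regularity conditions on $Q^{(\varepsilon)}_{ij}$ guaranteeing a well-defined process with finite $e_{ij}(\varepsilon)$; the claim concerns only $p_{ij}$ and $e_{ij}$. Condition A: there are nonempty $\mathbb{Y}_i\subseteq\mathbb{X}$ with (a) $p_{ij}(\varepsilon)>0$ for $j\in\mathbb{Y}_i$; (b) $p_{ij}(\varepsilon)=0$ (hence $e_{ij}(\varepsilon)=0$) for $j\notin\mathbb{Y}_i$; (c) for all $i,j$ there are $n\ge1$ and $i=l_0,\dots,l_n=j$ with $l_m\in\mathbb{Y}_{l_{m-1}}$. Condition D': for $j\in\mathbb{Y}_i$, $p_{ij}(\varepsilon)=\sum_{l=l^-_{ij}}^{l^+_{ij}}a_{ij}[l]\varepsilon^l+o_{ij}(\varepsilon)$ with integers $0\le l^-_{ij}\le l^+_{ij}$, $a_{ij}[l^-_{ij}]>0$, $|o_{ij}(\varepsilon)|\le G_{ij}\varepsilon^{l^+_{ij}+\delta_{ij}}$ for $0<\varepsilon\le\varepsilon_{ij}$,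 $\delta_{ij}\in(0,1]$, $G_{ij}\in(0,\infty)$, $\varepsilon_{ij}\in(0,\varepsilon_0]$. Condition E': for $j\in\mathbb{Y}_i$, $e_{ij}(\varepsilon)=\sum_{l=m^-_{ij}}^{m^+_{ij}}b_{ij}[l]\varepsilon^l+\dot o_{ij}(\varepsilon)$ with integers $m^-_{ij}\le m^+_{ij}$, $b_{ij}[m^-_{ij}]>0$, $|\dot o_{ij}(\varepsilon)|\le\dot G_{ij}\varepsilon^{m^+_{ij}+\dot\delta_{ij}}$ for $0<\varepsilon\le\dot\varepsilon_{ij}$, $\dot\delta_{ij}\in(0,1]$, $\dot G_{ij}\in(0,\infty)$, $\dot\varepsilon_{ij}\in(0,\varepsilon_0]$. Reduced process: for $r\in\mathbb{X}$, ${}_r\eta^{(\varepsilon)}(t)$ is the semi-Markov process on ${}_r\mathbb{X}=\mathbb{X}\setminus\{r\}$ obtained by observing $\eta^{(\varepsilon)}$ only at jump times into ${}_r\mathbb{X}$ (excursions through $r$ are absorbed into sojourn times); its embedded transition probabilities are ${}_rp_{ij}=p_{ij}+p_{ir}\frac{p_{rj}}{1-p_{rr}}$ and its sojourn expectations are ${}_re_{ij}=e_{ij}+e_{ir}\frac{p_{rj}}{1-p_{rr}}+e_{rr}\frac{p_{ir}}{1-p_{rr}}\frac{p_{rj}}{1-p_{rr}}+e_{rj}\frac{p_{ir}}{1-p_{rr}}$ (all functions of $\varepsilon$), $i,j\in{}_r\mathbb{X}$; its transition sets are ${}_r\mathbb{Y}_i=\{j\in{}_r\mathbb{X}: j\in\mathbb{Y}_i\text{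 or }(r\in\mathbb{Y}_i\text{ and }j\in\mathbb{Y}_r)\}$. *)

(* Defs.v *)
From HB Require Import structures.
From mathcomp Require Import all_boot all_order all_algebra.
From mathcomp Require Import all_classical all_reals all_analysis.
Set Implicit Arguments. Unset Strict Implicit. Unset Printing Implicit Defensive.
Import Order.TTheory GRing.Theory Num.Theory.
Local Open Scope ring_scope.

Section Defs.
Variable R : realType.

(* A perturbed semi-Markov process on a finite state space T is represented by
   its embedded transition probabilities p i j eps and the expectations of the
   sojourn times e i j eps (the claim concerns only these). *)

(* Standing regularity (the part expressible in terms of p and e):
   p(eps) is a stochastic matrix and the e_ij(eps) are (finite) nonnegative. *)
Definition semiMarkov_pe (T : finType) (eps0 : R)
    (p e : T -> T -> R -> R) : Prop :=
  forall eps, 0 < eps <= eps0 ->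
    (forall i j, 0 <= p i j eps) /\
    (forall i, \sum_(j : T) p i j eps = 1) /\
    (forall i j, 0 <= e i j eps).

Definition condA (T : finType) (eps0 : R) (p e : T -> T -> R -> R)
    (Y : T -> {set T}) : Prop :=
  (forall i, [exists j, j \in Y i]) /\
  (forall eps, 0 < eps <= eps0 ->
     (forall i j, j \in Y i -> 0 < p i j eps) /\
     (forall i j, j \notin Y i -> p i j eps = 0 /\ e i j eps = 0)) /\
  (forall i j, exists (n : nat) (l : nat -> T),
     [/\ (0 < n)%N, l 0%N = i, l n = j &
         forall m, (0 < m <= n)%N -> l m \in Y (l m.-1)]).

Definition expD (eps0 : R) (f : R -> R) (lm lp : nat) (a : nat -> R)
    (d G eps1 : R) : Prop :=
  [/\ (lm <= lp)%N, 0 < a lm, 0 < d <= 1, (0 < G) /\ (0 < eps1 <= eps0) &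
      forall eps, 0 < eps <= eps1 ->
        `| f eps - \sum_(lm <= l < lp.+1) a l * eps ^+ l |
          <= G * eps `^ (lp%:R + d)].

(* Expansion of type E': integer exponents mm <= mp (possibly negative);
   the sum runs over l = mm, mm+1, ..., mp. *)
Definition expE (eps0 : R) (f : R -> R) (mm mp : int) (b : int -> R)
    (d G eps1 : R) : Prop :=
  [/\ mm <= mp, 0 < b mm, 0 < d <= 1, (0 < G) /\ (0 < eps1 <= eps0) &
      forall eps, 0 < eps <= eps1 ->
        `| f eps - \sum_(k < (absz (mp - mm)).+1)
                     b (mm + k%:Z) * eps ^ (mm + k%:Z) |
          <= G * eps `^ (mp%:~R + d)].

Definition condD (T : finType) (eps0 : R) (p : T -> T -> R -> R)
    (Y : T -> {set T}) : Prop :=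
  forall i j, j \in Y i ->
    exists (lm lp : nat) (a : nat -> R) (d G eps1 : R),
      expD eps0 (p i j) lm lp a d G eps1.

Definition condE_ge (T : finType) (eps0 : R) (e : T -> T -> R -> R)
    (Y : T -> {set T}) (dlow : R) : Prop :=
  forall i j, j \in Y i ->
    exists (mm mp : int) (b : int -> R) (d G eps1 : R),
      expE eps0 (e i j) mm mp b d G eps1 /\ dlow <= d.

Definition rX (N : nat) (r : 'I_N) : finType := {i : 'I_N | i != r}.

Definition rp (N : nat) (r : 'I_N) (p : 'I_N -> 'I_N -> R -> R)
    (i j : rX r) (eps : R) : R :=
  p (val i) (val j) eps + p (val i) r eps * (p r (val j) eps / (1 - p r r eps)).

Definition re (N : nat) (r : 'I_N) (p e : 'I_N -> 'I_N -> R -> R)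
    (i j : rX r) (eps : R) : R :=
  e (val i) (val j) eps
  + e (val i) r eps * (p r (val j) eps / (1 - p r r eps))
  + e r r eps * (p (val i) r eps / (1 - p r r eps))
              * (p r (val j) eps / (1 - p r r eps))
  + e r (val j) eps * (p (val i) r eps / (1 - p r r eps)).

Definition rY (N : nat) (r : 'I_N) (Y : 'I_N -> {set 'I_N}) (i : rX r)
    : {set rX r} :=
  [set j : rX r | (val j \in Y (val i)) || ((r \in Y (val i)) && (val j \in Y r))].

(* delta^* = min over i in X, j in Y_i of (delta_ij /\ delta-dot_ij).
   (All these are in (0,1], and the Y_i are nonempty, so 1 is a neutral start.) *)
Definition deltastar (N : nat) (Y : 'I_N -> {set 'I_N}) (dl dd : 'I_N -> 'I_N -> R)
    : R :=
  \big[Num.min/1]_(i : 'I_N) \big[Num.min/1]_(j in Y i) Num.min (dl i j) (dd i j).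

End Defs.

Arguments rp {R N} r p i j eps.
Arguments re {R N} r p e i j eps.
Arguments rY {N} r Y i.

(* Main.v *)
From HB Require Import structures.
From mathcomp Require Import all_boot all_order all_algebra.
From mathcomp Require Import all_classical all_reals all_analysis.
From mathcomp Require Import ring lra zify.
Require Import Defs.
Import Order.TTheory GRing.Theory Num.Theory.
Local Open Scope ring_scope.

Section Ex.
Variable R : realType.
Variables (eps0 d : R).
Hypothesis eps0P : 0 < eps0 <= 1.
Hypothesis dP : 0 < d <= 1.

Lemma pwD (e x y : R) : 0 < e -> e `^ (x + y) = e `^ x * e `^ y.
Proof. by move=> e0; rewrite powRD //; apply/implyP => _; rewrite gt_eqF. Qed.

Lemma pw_le (e x y : R) : 0 < e <= 1 -> x <= y -> e `^ y <= e `^ x.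
Proof. by move=> ? ?; apply: ger_powR. Qed.

Lemma pwd_le1 (e : R) : 0 < e <= 1 -> e `^ d <= 1.
Proof.
move=> he; rewrite -(powRr0 e); apply: pw_le => //.
by case/andP: dP => /ltW.
Qed.

Lemma le_d1 (e : R) : 0 < e <= 1 -> e <= e `^ d.
Proof. by move=> he; apply: ger1_powR => //; case/andP: dP. Qed.

Definition ex1 (f : R -> R) (m : int) (c : R) :=
  0 < c /\ exists G e1, [/\ 0 < G, 0 < e1 <= eps0 & forall eps, 0 < eps <= e1 ->
    `|f eps - c * eps `^ m%:~R| <= G * eps `^ (m%:~R + d)].

Lemma small (G c : R) : 0 < G -> 0 < c ->
  exists e2, 0 < e2 <= eps0 /\ forall eps, 0 < eps <= e2 -> G * eps `^ d <= c.
Proof.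
move=> G0 c0; case/andP: eps0P => e00 e01; case/andP: dP => d0 d1.
exists (Num.min eps0 ((c / G) `^ d^-1)); split.
  by rewrite lt_min e00 powR_gt0 ?divr_gt0 // ge_min lexx.
move=> eps /andP[ep0]; rewrite le_min => /andP[_ h].
have h2 : eps `^ d <= ((c / G) `^ d^-1) `^ d.
  apply: ge0_ler_powR => //; first exact: ltW.
    by rewrite nnegrE ltW.
  by rewrite nnegrE powR_ge0.
have e : ((c / G) `^ d^-1) `^ d = c / G.
  by rewrite -powRrM mulVf ?gt_eqF // powRr1 // divr_ge0 // ltW.
rewrite e in h2.
apply: le_trans (ler_wpM2l (ltW G0) h2) _.
by rewrite mulrC divfK ?gt_eqF.
Qed.

Lemma ex1_ext f g m c : (forall eps, 0 < eps <= eps0 -> f eps = g eps) ->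
  ex1 f m c -> ex1 g m c.
Proof.
move=> fg [c0 [G [e1 [G0 /andP[e10 e1e0] H]]]]; split=> //; exists G, e1; split=> //.
  by rewrite e10.
move=> eps /andP[ep0 epe1]; rewrite -fg; first by apply: H; rewrite ep0.
by rewrite ep0 (le_trans epe1).
Qed.

Lemma intr_ltd (m n : int) : m < n -> m%:~R + d <= (n%:~R : R).
Proof.
rewrite -lezD1 -(ler_int R) intrD => h; apply: le_trans h.
by rewrite lerD2l; case/andP: dP.
Qed.

Lemma ex1_add_lt f g m n a b : m < n -> ex1 f m a -> ex1 g n b ->
  ex1 (fun eps => f eps + g eps) m a.
Proof.
move=> mn [a0 [G1 [e1 [G10 /andP[e10 e1e0] H1]]]] [b0 [G2 [e2 [G20 /andP[e20 e2e0] H2]]]].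
split=> //; exists (G1 + G2 + b), (Num.min e1 e2); split.
- by rewrite !addr_gt0.
- by rewrite lt_min e10 e20 ge_min e1e0.
move=> eps /andP[ep0]; rewrite le_min => /andP[h1 h2].
have ep1 : 0 < eps <= 1.
  by rewrite ep0 (le_trans h1) // (le_trans e1e0) //; case/andP: eps0P.
have {H1}H1 : _ := H1 eps (introT andP (conj ep0 h1)).
have {H2}H2 : _ := H2 eps (introT andP (conj ep0 h2)).
have hmn := intr_ltd m n mn.
have k1 : eps `^ (n%:~R + d) <= eps `^ (m%:~R + d).
  apply: pw_le => //; apply: le_trans hmn _; rewrite lerDl; case/andP: dP=> /ltW //.
have k2 : eps `^ (n%:~R) <= eps `^ (m%:~R + d) by apply: pw_le.
have k3 : 0 <= eps `^ (m%:~R + d) by apply: powR_ge0.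
have k4 : 0 <= eps `^ (n%:~R) by apply: powR_ge0.
have k5 : G2 * eps `^ (n%:~R + d) <= G2 * eps `^ (m%:~R + d) by rewrite ler_pM2l.
have k6 : b * eps `^ (n%:~R) <= b * eps `^ (m%:~R + d) by rewrite ler_pM2l.
move: H1 H2; rewrite !ler_norml => /andP[u1 u2] /andP[v1 v2].
apply/andP; split; nra.
Qed.

Lemma ex1_add_eq f g m a b : ex1 f m a -> ex1 g m b ->
  ex1 (fun eps => f eps + g eps) m (a + b).
Proof.
move=> [a0 [G1 [e1 [G10 /andP[e10 e1e0] H1]]]] [b0 [G2 [e2 [G20 /andP[e20 e2e0] H2]]]].
split; first by rewrite addr_gt0.
exists (G1 + G2), (Num.min e1 e2); split.
- by rewrite !addr_gt0.
- by rewrite lt_min e10 e20 ge_min e1e0.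
move=> eps /andP[ep0]; rewrite le_min => /andP[h1 h2].
have {H1}H1 : _ := H1 eps (introT andP (conj ep0 h1)).
have {H2}H2 : _ := H2 eps (introT andP (conj ep0 h2)).
move: H1 H2; rewrite !ler_norml => /andP[u1 u2] /andP[v1 v2].
apply/andP; split; nra.
Qed.

Lemma ex1_mul f g m n a b : ex1 f m a -> ex1 g n b ->
  ex1 (fun eps => f eps * g eps) (m + n) (a * b).
Proof.
move=> [a0 [G1 [e1 [G10 /andP[e10 e1e0] H1]]]] [b0 [G2 [e2 [G20 /andP[e20 e2e0] H2]]]].
split; first by rewrite mulr_gt0.
exists (G1 * G2 + a * G2 + b * G1), (Num.min e1 e2); split.
- by rewrite !addr_gt0 ?mulr_gt0.
- by rewrite lt_min e10 e20 ge_min e1e0.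
move=> eps /andP[ep0]; rewrite le_min => /andP[h1 h2].
have ep1 : 0 < eps <= 1.
  by rewrite ep0 (le_trans h1) // (le_trans e1e0) //; case/andP: eps0P.
have {H1}H1 : _ := H1 eps (introT andP (conj ep0 h1)).
have {H2}H2 : _ := H2 eps (introT andP (conj ep0 h2)).
rewrite intrD !pwD // in H1 H2 *.
have D1 := pwd_le1 eps ep1.
move: H1 H2 D1.
have := powR_gt0 (m%:~R) ep0; have := powR_gt0 (n%:~R) ep0; have := powR_gt0 d ep0.
set A := eps `^ m%:~R; set B := eps `^ n%:~R; set D := eps `^ d.
move=> D0 B0 A0 H1 H2 D1.
set u := f eps - a * A; set v := g eps - b * B.
have -> : f eps * g eps - a * b * (A * B) = u * v + (a * A) * v + (b * B) * u.
  by rewrite /u /v; ring.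
apply: le_trans (ler_normD _ _) _; apply: le_trans (lerD (ler_normD _ _) (lexx _)) _.
rewrite !normrM (gtr0_norm a0) (gtr0_norm b0) (gtr0_norm A0) (gtr0_norm B0).
have k1 : `|u| * `|v| <= (G1 * (A * D)) * (G2 * (B * D)) by apply: ler_pM.
have k2 : (G1 * (A * D)) * (G2 * (B * D)) <= G1 * G2 * (A * B * D).
  have -> : (G1 * (A * D)) * (G2 * (B * D)) = (G1 * G2 * (A * B * D)) * D by ring.
  by apply: ler_piMr => //; rewrite !mulr_ge0 ?ltW.
have k3 : a * A * `|v| <= a * A * (G2 * (B * D)) by rewrite ler_pM2l ?mulr_gt0.
have k4 : b * B * `|u| <= b * B * (G1 * (A * D)) by rewrite ler_pM2l ?mulr_gt0.
lra.
Qed.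

Lemma ex1_inv g n b : ex1 g n b -> ex1 (fun eps => (g eps)^-1) (- n) b^-1.
Proof.
move=> [b0 [G [e1 [G0 /andP[e10 e1e0] H]]]].
have [e2 [/andP[e20 e2e0] He2]] := small G (b / 2) G0 (divr_gt0 b0 (ltr0Sn R 1)).
split; first by rewrite invr_gt0.
exists (2 * G / b ^+ 2), (Num.min e1 e2); split.
- by rewrite divr_gt0 ?mulr_gt0 ?exprn_gt0.
- by rewrite lt_min e10 e20 ge_min e1e0.
move=> eps /andP[ep0]; rewrite le_min => /andP[h1 h2].
have ep1 : 0 < eps <= 1.
  by rewrite ep0 (le_trans h1) // (le_trans e1e0) //; case/andP: eps0P.
have {H}H : _ := H eps (introT andP (conj ep0 h1)).
have {He2}He2 : _ := He2 eps (introT andP (conj ep0 h2)).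
rewrite pwD // in H.
rewrite intrN (addrC (- n%:~R)) pwD // powRN.
move: H He2.
have := powR_gt0 (n%:~R) ep0; have := powR_gt0 d ep0.
set B := eps `^ n%:~R; set D := eps `^ d; set x := g eps.
move=> D0 B0 H He2.
have hx : b * B / 2 <= x.
  move: H; rewrite ler_norml => /andP[u1 u2].
  have : G * D * B <= b / 2 * B by rewrite ler_pM2r.
  lra.
have x0 : 0 < x by apply: lt_le_trans hx; rewrite !mulr_gt0 ?invr_gt0.
have -> : x^-1 - b^-1 * B^-1 = (b * B - x) / (x * (b * B)).
  by field; rewrite !gt_eqF.
rewrite normrM [`|(_ * _)^-1|]gtr0_norm ?invr_gt0 ?mulr_gt0 // distrC.
rewrite ler_pdivrMr ?mulr_gt0 //.
apply: le_trans H _.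
have -> : 2 * G / b ^+ 2 * (D * B^-1) * (x * (b * B)) = (G * D) * (2 * x / b).
  by field; rewrite !gt_eqF.
have hB : B <= 2 * x / b by rewrite ler_pdivlMr //; lra.
have h : G * D * B <= G * D * (2 * x / b) by rewrite ler_pM2l ?mulr_gt0.
lra.
Qed.

Definition E1 f := exists m c, ex1 f m c.
Definition Ez (f : R -> R) := forall eps, 0 < eps <= eps0 -> f eps = 0.
Definition Ex f := Ez f \/ E1 f.

Lemma E1_add f g : E1 f -> E1 g -> E1 (fun eps => f eps + g eps).
Proof.
move=> [m [a hf]] [n [b hg]].
case: (ltgtP m n) => mn.
- by exists m, a; exact: (ex1_add_lt _ _ _ _ _ _ mn hf hg).
- exists n, b; apply: (ex1_ext (fun eps => g eps + f eps)).
    by move=> eps _; rewrite addrC.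
  exact: (ex1_add_lt _ _ _ _ _ _ mn hg hf).
- by exists m, (a + b); rewrite -mn in hg; exact: ex1_add_eq.
Qed.

Lemma E1_addl f g : E1 f -> Ex g -> E1 (fun eps => f eps + g eps).
Proof.
move=> hf [hg|hg]; last exact: (E1_add _ _ hf hg).
case: hf => m [c hf]; exists m, c; apply: (ex1_ext f) hf.
by move=> eps /hg ->; rewrite addr0.
Qed.

Lemma E1_addr f g : Ex f -> E1 g -> E1 (fun eps => f eps + g eps).
Proof.
move=> hf hg; case: (E1_addl _ _ hg hf) => m [c h]; exists m, c.
by apply: (ex1_ext _ _ _ _ _ h) => eps _; rewrite addrC.
Qed.

Lemma Ex_add f g : Ex f -> Ex g -> Ex (fun eps => f eps + g eps).
Proof.
move=> [hf|hf] hg; last by right; apply: (E1_addl _ _ hf).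
case: hg => hg; last by right; apply: (E1_addr _ _ _ hg); left.
by left => eps he; rewrite hf // hg // addr0.
Qed.

Lemma E1_mul f g : E1 f -> E1 g -> E1 (fun eps => f eps * g eps).
Proof. by move=> [m [a hf]] [n [b hg]]; exists (m + n), (a * b); apply: (ex1_mul _ _ _ _ _ _ hf hg). Qed.

Lemma Ex_mul f g : Ex f -> Ex g -> Ex (fun eps => f eps * g eps).
Proof.
move=> [hf|hf]; first by left => eps he; rewrite hf // mul0r.
move=> [hg|hg]; first by left => eps he; rewrite hg // mulr0.
by right; apply: (E1_mul _ _ hf hg).
Qed.

Lemma E1_inv g : E1 g -> E1 (fun eps => (g eps)^-1).
Proof. by move=> [n [b hg]]; exists (- n), b^-1; apply: (ex1_inv _ _ _ hg). Qed.

Lemma E1_div f g : E1 f -> E1 g -> E1 (fun eps => f eps / g eps).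
Proof. by move=> hf hg; apply: (E1_mul _ _ hf (E1_inv _ hg)). Qed.

Lemma Ex_div f g : Ex f -> E1 g -> Ex (fun eps => f eps / g eps).
Proof. by move=> hf hg; apply: (Ex_mul _ _ hf); right; apply: (E1_inv _ hg). Qed.

Lemma ex1_bounded f m c : ex1 f m c ->
  (forall eps, 0 < eps <= eps0 -> f eps <= 1) -> 0 <= m.
Proof.
move=> [c0 [G [e1 [G0 /andP[e10 e1e0] H]]]] hb.
rewrite leNgt; apply/negP => m0.
have [e2 [/andP[e20 e2e0] He2]] := small G (c / 2) G0 (divr_gt0 c0 (ltr0Sn R 1)).
set eps := Num.min (Num.min e1 e2) (c / 4).
have ep0 : 0 < eps by rewrite !lt_min e10 e20 divr_gt0.
have : eps <= Num.min e1 e2 by rewrite ge_min lexx.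
rewrite le_min => /andP[h1 h2].
have h3 : eps <= c / 4 by rewrite ge_min lexx orbT.
have ep1 : 0 < eps <= 1.
  by rewrite ep0 (le_trans h1) // (le_trans e1e0) //; case/andP: eps0P.
have {H}H : _ := H eps (introT andP (conj ep0 h1)).
have {He2}He2 : _ := He2 eps (introT andP (conj ep0 h2)).
have {hb}hb : _ := hb eps (introT andP (conj ep0 (le_trans h1 e1e0))).
rewrite pwD // in H.
have hA : eps^-1 <= eps `^ m%:~R.
  rewrite -(powR_inv1 (ltW ep0)); apply: pw_le => //.
  have h : m + 1 <= 0 by rewrite lezD1.
  have : ((m + 1)%:~R : R) <= (0%:~R : R) by rewrite ler_int.
  rewrite intrD /= => h'; lra.
move: H He2 hb hA.
have := powR_gt0 (m%:~R) ep0; have := powR_gt0 d ep0.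
set A := eps `^ m%:~R; set D := eps `^ d.
move=> D0 A0 H He2 hb hA.
rewrite ler_norml in H; case/andP: H => u1 u2.
have k1 : G * D * A <= c / 2 * A by rewrite ler_pM2r.
have k2 : c / 2 * A <= 1 by lra.
have k3 : 1 <= A * eps.
  by rewrite -(mulVf (negbT (gt_eqF ep0))) ler_pM2r.
have k4 : c / 2 * A * eps <= eps by rewrite -[X in _ <= X]mul1r ler_pM2r.
have k5 : c / 2 <= c / 2 * A * eps.
  by rewrite -mulrA -[X in X <= _]mulr1 ler_pM2l // divr_gt0.
lra.
Qed.

Lemma expD_ex1 f lm lp (a : nat -> R) dl G el : d <= dl ->
  expD eps0 f lm lp a dl G el -> ex1 f (lm%:Z) (a lm).
Proof.
move=> ddl [lmp a0 /andP[dl0 dl1] [G0 /andP[el0 ele0]] H].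
split=> //.
set C := \sum_(lm.+1 <= l < lp.+1) `|a l|.
have C0 : 0 <= C by apply: sumr_ge0 => i _.
exists (G + C + 1), el; split.
- by rewrite ltr_wpDl // addr_ge0 // ltW.
- by rewrite el0.
move=> eps /andP[ep0 epl]; have {H}H := H eps (introT andP (conj ep0 epl)).
have ep1 : 0 < eps <= 1.
  by rewrite ep0 (le_trans epl) // (le_trans ele0) //; case/andP: eps0P.
rewrite big_ltn ?ltnS // in H.
set S := \sum_(lm.+1 <= l < lp.+1) a l * eps ^+ l in H.
change ((Posz lm)%:~R : R) with (lm%:R : R).
have hS : `|S| <= C * eps `^ (lm%:R + d).
  apply: le_trans (ler_norm_sum _ _ _) _.
  rewrite /C mulr_suml; apply: ler_sum_nat => l /andP[hl _].
  rewrite normrM; apply: ler_wpM2l => //; rewrite -(powR_mulrn _ (ltW ep0)) ger0_norm ?powR_ge0 //.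
  apply: pw_le => //; apply: le_trans (_ : (lm.+1)%:R <= _).
    by rewrite -natr1 lerD2l; case/andP: dP.
  by rewrite ler_nat.
have hR : G * eps `^ (lp%:R + dl) <= G * eps `^ (lm%:R + d).
  by rewrite ler_pM2l //; apply: pw_le => //; apply: lerD => //; rewrite ler_nat.
have P0 : 0 <= eps `^ (lm%:R + d) by apply: powR_ge0.
rewrite -(powR_mulrn _ (ltW ep0)) in H.
move: H hS hR P0.
set T := eps `^ (lm%:R + d); set U := eps `^ (lp%:R + dl).
rewrite !ler_norml => /andP[u1 u2] /andP[v1 v2] hR P0.
apply/andP; split; nra.
Qed.

Lemma expE_ex1 f mm mp (b : int -> R) dl G el : d <= dl ->
  expE eps0 f mm mp b dl G el -> ex1 f mm (b mm).
Proof.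
move=> ddl [lmp b0 /andP[dl0 dl1] [G0 /andP[el0 ele0]] H].
split=> //.
set n := absz (mp - mm).
set C := \sum_(i < n) `|b (mm + (lift ord0 i : nat)%:Z)|.
have C0 : 0 <= C by apply: sumr_ge0 => i _.
exists (G + C + 1), el; split.
- by rewrite ltr_wpDl // addr_ge0 // ltW.
- by rewrite el0.
move=> eps /andP[ep0 epl]; have {H}H := H eps (introT andP (conj ep0 epl)).
have ep1 : 0 < eps <= 1.
  by rewrite ep0 (le_trans epl) // (le_trans ele0) //; case/andP: eps0P.
rewrite big_ord_recl /= addr0 in H.
set S := \sum_(i < n) _ in H.
have hS : `|S| <= C * eps `^ (mm%:~R + d).
  apply: le_trans (ler_norm_sum _ _ _) _.
  rewrite /C mulr_suml; apply: ler_sum => i _.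
  rewrite normrM; apply: ler_wpM2l => //; rewrite -(powR_intmul _ (ltW ep0)) ger0_norm ?powR_ge0 //.
  apply: pw_le => //; rewrite intrD lerD2l /bump leq0n add1n.
  change ((Posz i.+1)%:~R : R) with (i.+1%:R : R).
  by case/andP: dP => _ h; apply: le_trans h _; rewrite ler1n.
have hR : G * eps `^ (mp%:~R + dl) <= G * eps `^ (mm%:~R + d).
  by rewrite ler_pM2l //; apply: pw_le => //; apply: lerD => //; rewrite ler_int.
have P0 : 0 <= eps `^ (mm%:~R + d) by apply: powR_ge0.
rewrite -(powR_intmul _ (ltW ep0)) in H.
move: H hS hR P0.
set T := eps `^ (mm%:~R + d); set U := eps `^ (mp%:~R + dl).
rewrite !ler_norml => /andP[u1 u2] /andP[v1 v2] hR P0.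
apply/andP; split; nra.
Qed.

Lemma ex1_expE f m c : ex1 f m c ->
  exists G e1, expE eps0 f m m (fun _ => c) d G e1.
Proof.
move=> [c0 [G [e1 [G0 he1 H]]]]; exists G, e1; split=> //.
move=> eps he; rewrite subrr /= big_ord1 /= addr0 -powR_intmul //.
  exact: H.
by case/andP: he => /ltW.
Qed.

Lemma ex1_expD f (k : nat) c : ex1 f (Posz k) c ->
  exists G e1, expD eps0 f k k (fun _ => c) d G e1.
Proof.
move=> [c0 [G [e1 [G0 he1 H]]]]; exists G, e1; split=> //.
move=> eps he; rewrite big_nat1 -powR_mulrn //.
  exact: H.
by case/andP: he => /ltW.
Qed.

Lemma E1_ext f g : (forall eps, 0 < eps <= eps0 -> f eps = g eps) -> E1 f -> E1 g.
Proof. by move=> fg [m [c h]]; exists m, c; apply: (ex1_ext f). Qed.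

Lemma Ex_ext f g : (forall eps, 0 < eps <= eps0 -> f eps = g eps) -> Ex f -> Ex g.
Proof.
move=> fg [h|h]; last by right; apply: (E1_ext f).
by left => eps he; rewrite -fg // h.
Qed.

Lemma Ex_sum (T : Type) (s : seq T) (P : pred T) (F : T -> R -> R) :
  (forall k, Ex (F k)) -> Ex (fun eps => \sum_(k <- s | P k) F k eps).
Proof.
move=> hF; elim: s => [|x s IH].
  by left => eps _; rewrite big_nil.
case: (boolP (P x)) => Px.
  apply: (Ex_ext (fun eps => F x eps + \sum_(k <- s | P k) F k eps)).
    by move=> eps _; rewrite big_cons Px.
  exact: (Ex_add _ _ (hF x) IH).
apply: (Ex_ext (fun eps => \sum_(k <- s | P k) F k eps)) => //.
by move=> eps _; rewrite big_cons (negbTE Px).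
Qed.

End Ex.

Arguments pwD {R} e x y.
Arguments E1_add {R eps0 d} eps0P dP {f g}.
Arguments E1_addl {R eps0 d} eps0P dP {f g}.
Arguments E1_addr {R eps0 d} eps0P dP {f g}.
Arguments Ex_add {R eps0 d} eps0P dP {f g}.
Arguments E1_mul {R eps0 d} eps0P dP {f g}.
Arguments Ex_mul {R eps0 d} eps0P dP {f g}.
Arguments E1_div {R eps0 d} eps0P dP {f g}.
Arguments Ex_div {R eps0 d} eps0P dP {f g}.
Arguments E1_inv {R eps0 d} eps0P dP {g}.
Arguments expD_ex1 {R eps0 d} eps0P dP {f lm lp a dl G el}.
Arguments expE_ex1 {R eps0 d} eps0P dP {f mm mp b dl G el}.
Arguments ex1_bounded {R eps0 d} eps0P dP {f m c}.
Arguments ex1_expE {R eps0 d} dP {f m c}.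
Arguments ex1_expD {R eps0 d} dP {f k c}.
Arguments E1_ext {R eps0 d} {f} g.
Arguments Ex_ext {R eps0 d} {f} g.
Arguments Ex_sum {R eps0 d} eps0P dP {T} s P F.

Lemma bigmin_le_seq (R : realType) (T : eqType) (s : seq T) (P : pred T)
  (F : T -> R) x i : i \in s -> P i -> \big[Num.min/x]_(j <- s | P j) F j <= F i.
Proof.
elim: s => // y s IH; rewrite in_cons big_cons => /orP[/eqP<-|hi] Pi.
  by rewrite Pi ge_min lexx.
case: (P y); last exact: IH.
by rewrite ge_min IH ?orbT.
Qed.

Lemma bigmin_gt0 (R : realType) (T : Type) (s : seq T) (P : pred T)
  (F : T -> R) x : 0 < x -> (forall i, P i -> 0 < F i) ->
  0 < \big[Num.min/x]_(j <- s | P j) F j.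
Proof. by move=> x0 hF; elim/big_rec: _ => // j y Pj h; rewrite lt_min hF. Qed.

Lemma bigmin_le_idx (R : realType) (T : Type) (s : seq T) (P : pred T)
  (F : T -> R) x : \big[Num.min/x]_(j <- s | P j) F j <= x.
Proof. by elim/big_rec: _ => // j y _ h; rewrite ge_min h orbT. Qed.

Lemma sum_rX (R : realType) (N : nat) (r : 'I_N) (F : 'I_N -> R) :
  \sum_(j : rX r) F (val j) = \sum_(k | k != r) F k.
Proof. by have := (@big_sub R 0 +%R _ (fun k => k != r) F) => h; exact: (esym h). Qed.

Definition reach (T : Type) (st : T -> T -> Prop) (x y : T) :=
  exists (n : nat) (l : nat -> T),
     [/\ (0 < n)%N, l 0%N = x, l n = y &
         forall m, (0 < m <= n)%N -> st (l m.-1) (l m)].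
Arguments reach {T} st x y.

Lemma reach_step T (st : T -> T -> Prop) x y : st x y -> reach st x y.
Proof.
move=> h; exists 1%N, (fun m => if m is 0%N then x else y); split=> //.
by move=> m; case: m => // -[|m] //.
Qed.

Lemma reach_trans T (st : T -> T -> Prop) x y z :
  reach st x y -> reach st y z -> reach st x z.
Proof.
move=> [n1 [l1 [n10 l10 l1n H1]]] [n2 [l2 [n20 l20 l2n H2]]].
exists (n1 + n2)%N, (fun m => if (m <= n1)%N then l1 m else l2 (m - n1)%N); split.
- by rewrite addn_gt0 n10.
- by rewrite leq0n.
- rewrite -{2}(addn0 n1) leq_add2l leqn0 (negbTE (lt0n_neq0 n20)).
  by rewrite addKn.
move=> m /andP[m0 mn].
case: (leqP m n1) => hm.
  rewrite (leq_trans (leq_pred m) hm); apply: H1; by rewrite m0.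
case: (leqP m.-1 n1) => hm'.
  have e : m.-1 = n1 by apply/eqP; rewrite eqn_leq hm' -ltnS prednK.
  rewrite e l1n -l20.
  have -> : (m - n1 = 1)%N by lia.
  exact: (H2 1%N (introT andP (conj isT n20))).
have -> : (m.-1 - n1 = (m - n1).-1)%N by lia.
apply: H2; apply/andP; split; lia.
Qed.
Arguments reach_step {T st x y}.
Arguments reach_trans {T st x y z}.

Set Implicit Arguments.
Section Main.
Variables (R : realType) (N : nat) (eps0 : R)
    (p e : 'I_N -> 'I_N -> R -> R) (Y : 'I_N -> {set 'I_N})
    (lm lp : 'I_N -> 'I_N -> nat) (a : 'I_N -> 'I_N -> nat -> R)
    (dl G el : 'I_N -> 'I_N -> R)
    (mm mp : 'I_N -> 'I_N -> int) (b : 'I_N -> 'I_N -> int -> R)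
    (dd Gd ed : 'I_N -> 'I_N -> R).
Hypotheses (N2 : (2 <= N)%N) (heps0 : 0 < eps0 <= 1)
  (hsm : semiMarkov_pe eps0 p e) (hA : condA eps0 p e Y)
  (hD : forall i j, j \in Y i ->
     expD eps0 (p i j) (lm i j) (lp i j) (a i j) (dl i j) (G i j) (el i j))
  (hE : forall i j, j \in Y i ->
     expE eps0 (e i j) (mm i j) (mp i j) (b i j) (dd i j) (Gd i j) (ed i j)).
Variable r : 'I_N.

Local Notation ds := (deltastar Y dl dd).

Lemma ds_le i j : j \in Y i -> ds <= dl i j /\ ds <= dd i j.
Proof.
move=> h.
have h1 : ds <= \big[Num.min/1]_(j in Y i) Num.min (dl i j) (dd i j).
  exact: (@bigmin_le_seq _ _ _ _ _ _ _ (mem_index_enum i) isT).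
have h2 : \big[Num.min/1]_(j in Y i) Num.min (dl i j) (dd i j)
    <= Num.min (dl i j) (dd i j).
  exact: (@bigmin_le_seq _ _ _ _ _ _ _ (mem_index_enum j) h).
by have := le_trans h1 h2; rewrite le_min => /andP[].
Qed.

Lemma dsP : 0 < ds <= 1.
Proof.
apply/andP; split; last exact: bigmin_le_idx.
apply: bigmin_gt0 => // i _; apply: bigmin_gt0 => // j hj.
case: (hD hj) => _ _ /andP[dl0 _] _ _.
case: (hE hj) => _ _ /andP[dd0 _] _ _.
by rewrite lt_min dl0 dd0.
Qed.

Lemma pE1 i j : j \in Y i -> E1 R eps0 ds (p i j).
Proof.
move=> h; exists (lm i j)%:Z, (a i j (lm i j)).
exact: (expD_ex1 heps0 dsP (proj1 (ds_le h)) (hD h)).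
Qed.

Lemma eE1 i j : j \in Y i -> E1 R eps0 ds (e i j).
Proof.
move=> h; exists (mm i j), (b i j (mm i j)).
exact: (expE_ex1 heps0 dsP (proj2 (ds_le h)) (hE h)).
Qed.

Lemma zeroY eps i j : 0 < eps <= eps0 -> j \notin Y i -> p i j eps = 0 /\ e i j eps = 0.
Proof. by move=> he h; case: hA => _ [H _]; case: (H eps he) => _; apply. Qed.

Lemma posY eps i j : 0 < eps <= eps0 -> j \in Y i -> 0 < p i j eps.
Proof. by move=> he h; case: hA => _ [H _]; case: (H eps he) => + _; apply. Qed.

Arguments zeroY {eps i j}.
Arguments posY {eps i j}.
Lemma pEx i j : Ex R eps0 ds (p i j).
Proof.
case: (boolP (j \in Y i)) => h; first by right; apply: pE1.
by left => eps he; case: (zeroY he h).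
Qed.

Lemma eEx i j : Ex R eps0 ds (e i j).
Proof.
case: (boolP (j \in Y i)) => h; first by right; apply: eE1.
by left => eps he; case: (zeroY he h).
Qed.

Lemma exit_first n (l : nat -> 'I_N) : l 0%N = r -> l n != r ->
  (forall m, (0 < m <= n)%N -> l m \in Y (l m.-1)) ->
  exists k, k != r /\ k \in Y r.
Proof.
elim: n => [|n IH] l0 ln H; first by rewrite l0 eqxx in ln.
case: (eqVneq (l n) r) => hn.
  exists (l n.+1); split; first exact: ln.
  by rewrite -hn; apply: H; rewrite ltn0Sn leqnn.
apply: IH => // m /andP[m0 mn]; apply: H; rewrite m0 /=; exact: leqW.
Qed.

Arguments exit_first {n l}.
Lemma k0_ex : exists k, k != r /\ k \in Y r.
Proof.
have h0 : (0 < N)%N by apply: leq_trans N2.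
pose o0 : 'I_N := Ordinal h0.
pose o1 : 'I_N := Ordinal N2.
have [w hw] : exists w : 'I_N, w != r.
  case: (eqVneq o0 r) => h; last by exists o0.
  by exists o1; rewrite -h; apply/eqP => /(congr1 val).
case: hA => _ [_ H]; case: (H r w) => n [l [n0 l0 ln Hs]].
by apply: (exit_first l0 _ Hs); rewrite ln.
Qed.

Lemma psum eps i : 0 < eps <= eps0 -> \sum_(k | k != i) p i k eps = 1 - p i i eps.
Proof.
move=> he; case: (hsm _ he) => _ [hs _]; have := hs i.
by rewrite (bigD1 i) //= => h; rewrite -h addrC addrK.
Qed.

Arguments psum {eps} i.
Lemma qsum eps i j : 0 < eps <= eps0 -> \sum_(k | k != i) p j k eps = 1 - p j i eps.
Proof.
move=> he; case: (hsm _ he) => _ [hs _]; have := hs j.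
by rewrite (bigD1 i) //= => h; rewrite -h addrC addrK.
Qed.

Arguments qsum {eps} i j.
Lemma q_gt0 eps : 0 < eps <= eps0 -> 0 < 1 - p r r eps.
Proof.
move=> he; case: k0_ex => k [kr kY].
rewrite -psum // (bigD1 k) //=.
apply: ltr_pwDl; first exact: posY.
by apply: sumr_ge0 => i _; case: (hsm _ he) => + _; apply.
Qed.

Arguments q_gt0 {eps}.
Lemma qE1 : E1 R eps0 ds (fun eps => 1 - p r r eps).
Proof.
case: k0_ex => k [kr kY].
apply: (@E1_ext _ _ _ (fun eps => p r k eps + \sum_(j | (j != r) && (j != k)) p r j eps)).
  by move=> eps he; rewrite -psum // [RHS](bigD1 k).
apply: (E1_addl heps0 dsP (pE1 kY)).
exact: (Ex_sum heps0 dsP _ _ (fun j => p r j) (fun j => pEx r j)).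
Qed.


Lemma rpEx (i j : rX r) : Ex R eps0 ds (rp r p i j).
Proof.
exact: (Ex_add heps0 dsP (pEx (val i) (val j))
  (Ex_mul heps0 dsP (pEx (val i) r) (Ex_div heps0 dsP (pEx r (val j)) qE1))).
Qed.

Lemma rpE1 (i j : rX r) : j \in rY r Y i -> E1 R eps0 ds (rp r p i j).
Proof.
rewrite inE => /orP[h|/andP[h1 h2]].
  exact: (E1_addl heps0 dsP (pE1 h)
    (Ex_mul heps0 dsP (pEx _ r) (Ex_div heps0 dsP (pEx r _) qE1))).
exact: (E1_addr heps0 dsP (pEx _ _)
   (E1_mul heps0 dsP (pE1 h1) (E1_div heps0 dsP (pE1 h2) qE1))).
Qed.

Lemma reE1 (i j : rX r) : j \in rY r Y i -> E1 R eps0 ds (re r p e i j).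
Proof.
have A := Ex_div heps0 dsP (pEx r (val j)) qE1.
have B := Ex_div heps0 dsP (pEx (val i) r) qE1.
have t2 := Ex_mul heps0 dsP (eEx (val i) r) A.
have t3 := Ex_mul heps0 dsP (Ex_mul heps0 dsP (eEx r r) B) A.
have t4 := Ex_mul heps0 dsP (eEx r (val j)) B.
rewrite inE => /orP[h|/andP[h1 h2]].
  exact: (E1_addl heps0 dsP (E1_addl heps0 dsP (E1_addl heps0 dsP (eE1 h) t2) t3) t4).
have t2' := E1_mul heps0 dsP (eE1 h1) (E1_div heps0 dsP (pE1 h2) qE1).
exact: (E1_addl heps0 dsP (E1_addl heps0 dsP (E1_addr heps0 dsP (eEx _ _) t2') t3) t4).
Qed.

Lemma rp_ge0 eps (i j : rX r) : 0 < eps <= eps0 -> 0 <= rp r p i j eps.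
Proof.
move=> he; have hq := q_gt0 he; case: (hsm _ he) => hp _.
rewrite /rp addr_ge0 // mulr_ge0 // divr_ge0 //; exact: ltW.
Qed.

Arguments rp_ge0 {eps} i j.
Lemma re_ge0 eps (i j : rX r) : 0 < eps <= eps0 -> 0 <= re r p e i j eps.
Proof.
move=> he; have hq := ltW (q_gt0 he); case: (hsm _ he) => hp [_ hee].
rewrite /re; repeat first [apply: addr_ge0 | apply: mulr_ge0 | apply: divr_ge0 | apply: hp | apply: hee | exact: hq | (rewrite invr_ge0; exact: hq)].
Qed.

Arguments re_ge0 {eps} i j.
Lemma rp_sum eps (i : rX r) : 0 < eps <= eps0 -> \sum_(j : rX r) rp r p i j eps = 1.
Proof.
move=> he; have hq := q_gt0 he.
rewrite /rp big_split /= -mulr_sumr -mulr_suml.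
have := @sum_rX R N r (fun k => p (val i) k eps); rewrite /= => ->.
have := @sum_rX R N r (fun k => p r k eps); rewrite /= => ->.
rewrite (qsum r (val i) he) (psum r he) mulfV ?gt_eqF //.
by rewrite mulr1 subrK.
Qed.

Arguments rp_sum {eps} i.
Lemma rp_le1 eps (i j : rX r) : 0 < eps <= eps0 -> rp r p i j eps <= 1.
Proof.
move=> he; rewrite -(rp_sum i he) (bigD1 j) //= lerDl.
by apply: sumr_ge0 => k _; apply: rp_ge0.
Qed.

Arguments rp_le1 {eps} i j.
Lemma exit2 (l : nat -> 'I_N) k : l 1%N = r -> l k != r -> (1 <= k)%N ->
  exists m, [/\ (1 < m <= k)%N, l m.-1 = r & l m != r].
Proof.
elim: k => [|k IH] // l1 lk _.
case: k IH lk => [|k] IH lk; first by rewrite l1 eqxx in lk.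
case: (eqVneq (l k.+1) r) => hk.
  by exists k.+2; split=> //; rewrite ltnS ltn0Sn leqnn.
have [m [/andP[m1 mk] hm hm']] := IH l1 hk isT.
by exists m; split=> //; rewrite m1 (leq_trans mk).
Qed.

Lemma irr_main B : forall n (l : nat -> 'I_N) (x y : rX r), (n <= B)%N ->
  (0 < n)%N -> l 0%N = val x -> l n = val y ->
  (forall m, (0 < m <= n)%N -> l m \in Y (l m.-1)) ->
  reach (fun u v : rX r => v \in rY r Y u) x y.
Proof.
elim: B => [|B IH] n l x y hn n0 l0 ln H.
  by move: hn n0; rewrite leqn0 => /eqP->.
have H1 := H 1%N (introT andP (conj isT n0)).
case: (eqVneq (l 1%N) r) => h1.
  have ny : l n != r by rewrite ln; exact: (valP y).
  have [m [/andP[m1 mn] hm hm']] := @exit2 l n h1 ny n0.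
  pose xm : rX r := exist (fun v => v != r) (l m) hm'.
  have st : xm \in rY r Y x.
    rewrite inE /=; apply/orP; right; apply/andP; split.
      by rewrite -l0 -h1.
    rewrite -{1}hm; apply: H; apply/andP; split; lia.
  case: (eqVneq m n) => emn.
    have -> : y = xm by apply: val_inj; rewrite /= -ln emn.
    exact: reach_step.
  apply: (reach_trans (reach_step st)).
  apply: (IH (n - m)%N (fun k => l (k + m)%N)) => //=.
  - lia.
  - have : (m < n)%N by rewrite ltn_neqAle emn mn.
    lia.
  - by rewrite subnK.
  - move=> k /andP[k0 kn].
    have -> : ((k.-1 + m) = (k + m).-1)%N by lia.
    apply: H; apply/andP; split; lia.
pose x1 : rX r := exist (fun v => v != r) (l 1%N) h1.
have st : x1 \in rY r Y x by rewrite inE /= -l0 H1.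
case: (eqVneq n 1%N) => en.
  have -> : y = x1 by apply: val_inj; rewrite /= -ln en.
  exact: reach_step.
apply: (reach_trans (reach_step st)).
apply: (IH (n - 1)%N (fun k => l (k + 1)%N)) => //=.
- lia.
- have : (1 < n)%N by rewrite ltn_neqAle eq_sym en n0.
  lia.
- by rewrite subnK.
- move=> k /andP[k0 kn].
  have -> : ((k.-1 + 1) = (k + 1).-1)%N by lia.
  apply: H; apply/andP; split; lia.
Qed.

Lemma main_result :
    [/\ semiMarkov_pe eps0 (rp r p) (re r p e),
        condA eps0 (rp r p) (re r p e) (rY r Y),
        condD eps0 (rp r p) (rY r Y) &
        condE_ge eps0 (re r p e) (rY r Y) (deltastar Y dl dd)].
Proof.
split.
- move=> eps he; split; first by move=> i j; apply: rp_ge0.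
  split; first by move=> i; apply: rp_sum.
  by move=> i j; apply: re_ge0.
- split.
    move=> i; case: hA => hne _; case/existsP: (hne (val i)) => k hk.
    case: (eqVneq k r) => hkr.
      case: k0_ex => k0 [k0r k0Y].
      apply/existsP; exists (exist (fun v => v != r) k0 k0r).
      by rewrite hkr in hk; rewrite inE /= hk k0Y orbT.
    apply/existsP; exists (exist (fun v => v != r) k hkr).
    by rewrite inE /= hk.
  split.
    move=> eps he; have hq := q_gt0 he; case: (hsm _ he) => hp [_ hee].
    split.
      move=> i j; rewrite inE => /orP[h|/andP[h1 h2]].
        have := posY he h; rewrite /rp.
        have : 0 <= p (val i) r eps * (p r (val j) eps / (1 - p r r eps)).
          by rewrite mulr_ge0 // divr_ge0 // ltW.
        move: (p (val i) r eps * _) => X; lra.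
      rewrite /rp; have := hp (val i) (val j).
      have : 0 < p (val i) r eps * (p r (val j) eps / (1 - p r r eps)).
        by rewrite mulr_gt0 ?divr_gt0 // ?(posY he h1) ?(posY he h2).
      move: (p (val i) r eps * _) => X; lra.
    move=> i j; rewrite inE negb_or negb_and => /andP[h1 h2].
    have [p1 e1] := zeroY he h1.
    case/orP: h2 => h2.
      have [p2 e2] := zeroY he h2.
      by rewrite /rp /re p1 e1 p2 e2 ?mul0r ?mulr0 ?mul0r ?addr0.
    have [p2 e2] := zeroY he h2.
    by rewrite /rp /re p1 e1 p2 e2 ?mul0r ?mulr0 ?mul0r ?addr0.
  move=> i j; case: hA => _ [_ H]; case: (H (val i) (val j)) => n [l [n0 l0 ln Hs]].
  exact: (@irr_main n n l i j (leqnn n) n0 l0 ln Hs).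
- move=> i j hj; case: (rpE1 hj) => m [c hm].
  have m0 := ex1_bounded heps0 dsP hm (fun eps he => rp_le1 i j he).
  case: m hm m0 => [k|k] hm m0 //.
  case: (ex1_expD dsP hm) => G' [e' H].
  by exists k, k, (fun _ => c), ds, G', e'.
- move=> i j hj; case: (reE1 hj) => m [c hm].
  case: (ex1_expE dsP hm) => G' [e' H].
  by exists m, m, (fun _ => c), ds, G', e'; split.
Qed.

End Main.

Unset Implicit Arguments.

Theorem theorem2 (R : realType) (N : nat) (eps0 : R)
    (p e : 'I_N -> 'I_N -> R -> R) (Y : 'I_N -> {set 'I_N})
    (lm lp : 'I_N -> 'I_N -> nat) (a : 'I_N -> 'I_N -> nat -> R)
    (dl G el : 'I_N -> 'I_N -> R)
    (mm mp : 'I_N -> 'I_N -> int) (b : 'I_N -> 'I_N -> int -> R)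
    (dd Gd ed : 'I_N -> 'I_N -> R) :
  (2 <= N)%N ->
  0 < eps0 <= 1 ->
  semiMarkov_pe eps0 p e ->
  condA eps0 p e Y ->
  (forall i j, j \in Y i ->
     expD eps0 (p i j) (lm i j) (lp i j) (a i j) (dl i j) (G i j) (el i j)) ->
  (forall i j, j \in Y i ->
     expE eps0 (e i j) (mm i j) (mp i j) (b i j) (dd i j) (Gd i j) (ed i j)) ->
  forall r : 'I_N,
    [/\ semiMarkov_pe eps0 (rp r p) (re r p e),
        condA eps0 (rp r p) (re r p e) (rY r Y),
        condD eps0 (rp r p) (rY r Y) &
        condE_ge eps0 (re r p e) (rY r Y) (deltastar Y dl dd)].
Proof.
move=> N2 heps0 hsm hA hD hE r.
exact: (main_result lm lp a dl G el mm mp b dd Gd ed N2 heps0 hsm hA hD hE r).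
Qed.
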